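(* Let $\tau$ be a continuous distributive triangle function on $\Delta^+$, $\Sigma$ a $\sigma$-ring of subsets of $\Omega\ne\emptyset$, and $\gamma^1,\gamma^2$ $\tau$-decomposable measures on $\Sigma$ continuous from below. If a measurable $f:\Omega\to[0,+\infty]$ is $\gamma^i$-integrable on $E\in\Sigma$ for $i=1,2$, then $f$ is $(\gamma^1\oplus_\tau\gamma^2)$-integrable on $E$ and $$\int_E f\,d(\gamma^1\oplus_\tau\gamma^2)=\int_E f\,d\gamma^1\ \oplus_\tau\ \int_E f\,d\gamma^2,$$ where $(\gamma^1\oplus_\tau\gamma^2)_F:=\tau(\gamma^1_F,\gamma^2_F)$ for $F\in\Sigma$.
   Context: $\Delta^+$: functions $F:[-\infty,+\infty]\to[0,1]$ non-decreasing, left-continuous on $\mathbb{R}$, $F(x)=0$ for $x\le0$, $F(+\infty)=1$, ordered pointwise; $\varepsilon_a(x)=1$ if $x>a$, else $0$. Triangle function: symmetric, associative $\tau:\Delta^+\times\Delta^+\to\Delta^+$, non-decreasing in each variable, identity $\varepsilon_0$; $G\oplus_\tau H=\tau(G,H)$, $\bigoplus_{k=1}^nG_k=\tau(G_1,\bigoplus_{k=2}^nG_k)$. $c\odot G=\varepsilon_0$ if $c=0$, $(c\odot G)(x)=G(x/c)$ if $c>0$; $\tau$ distributive if $c\odot(G\oplus H)=(c\odot G)\oplus(c\odot H)$ for all $c\ge0$. Convergence in $\Delta^+$ is weak convergence; $\tau$ continuous if continuous for it. $\tau$-decomposable measure on a ring $\Sigma$: $\gamma:\Sigma\to\Delta^+$,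 $\gamma_\emptyset=\varepsilon_0$, $\gamma_{E\cup F}=\tau(\gamma_E,\gamma_F)$ for disjoint $E,F$; continuous from below: $\gamma_{E_n}\to\gamma_E$ whenever $E_n\subseteq E_{n+1}$, $\bigcup E_n=E$ in $\Sigma$. Simple function $\sum_{i=1}^nx_i\chi_{E_i}$ ($x_i\in[0,\infty)$, $E_i\in\Sigma$ pairwise disjoint), $\int_Ef\,d\gamma=\bigoplus_ix_i\odot\gamma_{E\cap E_i}$. Measurable: pointwise limit of simple functions. $\mathcal S_{f,E}$: simple $\mathfrak f\le f$ on $E$. $f$ is $\gamma$-integrable on $E$ if some $H\in\Delta^+$ satisfies $\int_E\mathfrak f\,d\gamma\ge H$ for all $\mathfrak f\in\mathcal S_{f,E}$; then $\int_Ef\,d\gamma=\inf\{\int_E\mathfrak f\,d\gamma:\mathfrak f\in\mathcal S_{f,E}\}$ in $(\Delta^+,\le)$. *)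

(* Defs.v *)
From mathcomp Require Import all_boot all_order all_algebra.
From mathcomp Require Import all_classical all_reals all_analysis.
From Stdlib Require Import ClassicalEpsilon.
Import Order.TTheory GRing.Theory Num.Theory.
Import numFieldNormedType.Exports.
Set Implicit Arguments.
Unset Strict Implicit.
Unset Printing Implicit Defensive.
Local Open Scope classical_set_scope.
Local Open Scope ring_scope.

(* Elements of Delta^+ are represented as functions [-oo,+oo] -> R
   satisfying the predicate [D_distF]. *)
Definition D_distF (R : realType) (F : \bar R -> R) : Prop :=
  [/\ (forall x, 0 <= F x <= 1),
      (forall x y : \bar R, (x <= y)%E -> F x <= F y),
      (forall x : R, (fun y : R => F y%:E) @ x^'- --> F x%:E),
      (forall x : \bar R, (x <= 0)%E -> F x = 0) &
      F +oo%E = 1].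

Definition D_eps (R : realType) (a : R) : \bar R -> R :=
  fun x => if (a%:E < x)%E then 1 else 0.

Definition D_dle (R : realType) (F G : \bar R -> R) : Prop :=
  forall x, F x <= G x.

Definition D_smul (R : realType) (c : R) (G : \bar R -> R) : \bar R -> R :=
  if c == 0 then D_eps 0 else fun x => G (x * (c^-1)%:E)%E.

Definition D_dcvg (R : realType) (Fn : nat -> \bar R -> R) (F : \bar R -> R)
  : Prop :=
  forall x : R, {for x, continuous (fun y : R => F y%:E)} ->
    (fun n => Fn n x%:E) @ \oo --> F x%:E.

Definition D_triangle_function (R : realType)
  (tau : (\bar R -> R) -> (\bar R -> R) -> (\bar R -> R)) : Prop :=
  [/\ (forall F G, D_distF F -> D_distF G -> D_distF (tau F G)),
      (forall F G, D_distF F -> D_distF G -> tau F G = tau G F),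
      (forall F G H, D_distF F -> D_distF G -> D_distF H ->
         tau F (tau G H) = tau (tau F G) H),
      (forall F G H, D_distF F -> D_distF G -> D_distF H -> D_dle F G ->
         D_dle (tau F H) (tau G H) /\ D_dle (tau H F) (tau H G)) &
      (forall F, D_distF F -> tau F (D_eps 0) = F)].

Definition D_tau_continuous (R : realType)
  (tau : (\bar R -> R) -> (\bar R -> R) -> (\bar R -> R)) : Prop :=
  forall (Fn Gn : nat -> \bar R -> R) (F G : \bar R -> R),
    (forall n, D_distF (Fn n)) -> (forall n, D_distF (Gn n)) ->
    D_distF F -> D_distF G -> D_dcvg Fn F -> D_dcvg Gn G ->
    D_dcvg (fun n => tau (Fn n) (Gn n)) (tau F G).

Definition D_tau_distributive (R : realType)
  (tau : (\bar R -> R) -> (\bar R -> R) -> (\bar R -> R)) : Prop :=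
  forall (c : R) (G H : \bar R -> R), 0 <= c -> D_distF G -> D_distF H ->
    D_smul c (tau G H) = tau (D_smul c G) (D_smul c H).

Definition D_decomposable (R : realType) (Omega : Type)
  (tau : (\bar R -> R) -> (\bar R -> R) -> (\bar R -> R))
  (Sigma : set (set Omega)) (gamma : set Omega -> \bar R -> R) : Prop :=
  [/\ (forall E, Sigma E -> D_distF (gamma E)),
      gamma set0 = D_eps 0 &
      (forall E F, Sigma E -> Sigma F -> E `&` F = set0 ->
         gamma (E `|` F) = tau (gamma E) (gamma F))].

Definition D_cont_from_below (R : realType) (Omega : Type)
  (Sigma : set (set Omega)) (gamma : set Omega -> \bar R -> R) : Prop :=
  forall (En : nat -> set Omega) (E : set Omega),
    (forall n, Sigma (En n)) -> (forall n, En n `<=` En n.+1) ->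
    Sigma E -> \bigcup_n En n = E ->
    D_dcvg (fun n => gamma (En n)) (gamma E).

Definition D_msum (R : realType) (Omega : Type)
  (tau : (\bar R -> R) -> (\bar R -> R) -> (\bar R -> R))
  (g1 g2 : set Omega -> \bar R -> R) : set Omega -> \bar R -> R :=
  fun F => tau (g1 F) (g2 F).

(* A simple function sum_i x_i chi_{E_i} is given by the list of pairs
   (x_i, E_i). *)
Definition D_simple_rep (R : realType) (Omega : Type) (Sigma : set (set Omega))
  (s : seq (R * set Omega)) : Prop :=
  [/\ (forall p, p \in s -> 0 <= p.1),
      (forall p, p \in s -> Sigma p.2) &
      (forall i j, (i < size s)%N -> (j < size s)%N -> i != j ->
         (nth (0, set0) s i).2 `&` (nth (0, set0) s j).2 = set0)].

Definition D_simple_eval (R : realType) (Omega : Type)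
  (s : seq (R * set Omega)) (w : Omega) : R :=
  \sum_(p <- s) p.1 * \1_(p.2) w.

Definition D_simple_integral (R : realType) (Omega : Type)
  (tau : (\bar R -> R) -> (\bar R -> R) -> (\bar R -> R))
  (gamma : set Omega -> \bar R -> R) (E : set Omega)
  (s : seq (R * set Omega)) : \bar R -> R :=
  foldr (fun p acc => tau (D_smul p.1 (gamma (E `&` p.2))) acc) (D_eps 0) s.

Definition D_simple_measurable (R : realType) (Omega : Type)
  (Sigma : set (set Omega)) (f : Omega -> \bar R) : Prop :=
  exists sn : nat -> seq (R * set Omega),
    (forall n, D_simple_rep Sigma (sn n)) /\
    (forall w, (fun n => (D_simple_eval (sn n) w)%:E) @ \oo --> f w).

Definition D_simple_integrals (R : realType) (Omega : Type)
  (tau : (\bar R -> R) -> (\bar R -> R) -> (\bar R -> R))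
  (Sigma : set (set Omega)) (gamma : set Omega -> \bar R -> R)
  (E : set Omega) (f : Omega -> \bar R) : set (\bar R -> R) :=
  [set G | exists s, [/\ D_simple_rep Sigma s,
      (forall w, E w -> ((D_simple_eval s w)%:E <= f w)%E) &
      G = D_simple_integral tau gamma E s]].

Definition D_integrable (R : realType) (Omega : Type)
  (tau : (\bar R -> R) -> (\bar R -> R) -> (\bar R -> R))
  (Sigma : set (set Omega)) (gamma : set Omega -> \bar R -> R)
  (E : set Omega) (f : Omega -> \bar R) : Prop :=
  exists H, D_distF H /\
    (forall G, D_simple_integrals tau Sigma gamma E f G -> D_dle H G).

Definition D_is_dinf (R : realType) (S : set (\bar R -> R)) (I : \bar R -> R)
  : Prop :=
  [/\ D_distF I, (forall G, S G -> D_dle I G) &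
      (forall H, D_distF H -> (forall G, S G -> D_dle H G) -> D_dle H I)].

Definition D_dintegral (R : realType) (Omega : Type)
  (tau : (\bar R -> R) -> (\bar R -> R) -> (\bar R -> R))
  (Sigma : set (set Omega)) (gamma : set Omega -> \bar R -> R)
  (E : set Omega) (f : Omega -> \bar R) : \bar R -> R :=
  epsilon (inhabits (D_eps (0 : R)))
    (D_is_dinf (D_simple_integrals tau Sigma gamma E f)).

(* Main.v *)
Require Import Defs.
From mathcomp Require Import all_boot all_order all_algebra.
From mathcomp Require Import all_classical all_reals all_analysis.
From Stdlib Require Import ClassicalEpsilon.
Import Order.TTheory GRing.Theory Num.Theory.
Import numFieldNormedType.Exports.
Set Implicit Arguments.
Unset Strict Implicit.
Unset Printing Implicit Defensive.
Local Open Scope classical_set_scope.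
Local Open Scope ring_scope.
Section Basics.
Variable R : realType.
Local Notation dist := (\bar R -> R).

Lemma distF_ge0 (F : dist) x : D_distF F -> 0 <= F x.
Proof. by case=> /(_ x) /andP[]. Qed.
Lemma distF_le1 (F : dist) x : D_distF F -> F x <= 1.
Proof. by case=> /(_ x) /andP[]. Qed.
Lemma distF_mono (F : dist) x y : D_distF F -> (x <= y)%E -> F x <= F y.
Proof. by case=> _ H *; apply: H. Qed.
Lemma distF_lc (F : dist) (x : R) : D_distF F ->
  (fun y : R => F y%:E) @ x^'- --> F x%:E.
Proof. by case. Qed.
Lemma distF_le0 (F : dist) x : D_distF F -> (x <= 0)%E -> F x = 0.
Proof. by case=> _ _ _ H _; apply: H. Qed.
Lemma distF_oo (F : dist) : D_distF F -> F +oo%E = 1.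
Proof. by case. Qed.

Lemma cvg_left_ev (g : R -> R) (r c : R) :
  g r = c -> (\forall y \near r^'-, g y = c) -> g @ r^'- --> g r.
Proof.
move=> gr ev; rewrite gr.
apply: cvg_trans (near_eq_cvg _) (cvg_cst c).
by near=> y; rewrite (near ev y).
Unshelve. all: by end_near. Qed.

Lemma eps0_dist : D_distF (D_eps (0:R)).
Proof.
rewrite /D_eps; split.
- by move=> x; case: ifP => _; apply/andP; split; rewrite ?lexx ?ler01.
- move=> x y xy; case: ifP => h; case: ifP => h' //.
    by move: h'; rewrite (lt_le_trans h xy).
- move=> x; case: (ltP 0 x) => x0.
    apply: (@cvg_left_ev _ x 1); first by rewrite lte_fin x0.
    by near=> y; rewrite lte_fin ifT //; near: y; apply: nbhs_left_gt.
  apply: (@cvg_left_ev _ x 0); first by rewrite lte_fin ltNge x0.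
  near=> y; rewrite lte_fin ifF //; apply/negbTE; rewrite -leNgt.
  apply: (le_trans _ x0); apply/ltW; near: y; apply: nbhs_left_lt.
- by move=> x x0; rewrite ifF //; apply/negbTE; rewrite -leNgt.
- by rewrite ltry.
Unshelve. all: by end_near. Qed.

Lemma dle_eps0 (G : dist) : D_distF G -> D_dle G (D_eps 0).
Proof.
move=> dG x; rewrite /D_eps; case: ifP => h; first exact: distF_le1.
by rewrite distF_le0 // leNgt h.
Qed.

Lemma dle_refl (G : dist) : D_dle G G.
Proof. by move=> x. Qed.
Lemma dle_trans (F G H : dist) : D_dle F G -> D_dle G H -> D_dle F H.
Proof. by move=> a b x; exact: le_trans (a x) (b x). Qed.
Lemma dle_antisym (F G : dist) : D_dle F G -> D_dle G F -> F = G.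
Proof. by move=> a b; apply: funext => x; apply/eqP; rewrite eq_le a b. Qed.

Lemma smul0 (G : dist) : D_smul 0 G = D_eps 0.
Proof. by rewrite /D_smul eqxx. Qed.

Lemma smulE (c : R) (G : dist) x : 0 < c -> D_smul c G x = G (x * (c^-1)%:E)%E.
Proof. by move=> c0; rewrite /D_smul gt_eqF. Qed.

Lemma smul_dist c (G : dist) : 0 <= c -> D_distF G -> D_distF (D_smul c G).
Proof.
rewrite le_eqVlt => /predU1P[<-|c0] dG; first by rewrite smul0; exact: eps0_dist.
have ci : (0 <= (c^-1)%:E)%E by rewrite lee_fin invr_ge0 ltW.
split.
- by move=> x; rewrite smulE // distF_ge0 // distF_le1.
- by move=> x y xy; rewrite !smulE //; apply: distF_mono => //; exact: lee_wpmul2r.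
- move=> x; rewrite smulE //; apply/cvg_at_leftP => u [ux ucv].
  under eq_fun do rewrite smulE // -EFinM.
  rewrite -EFinM.
  move: (proj1 (cvg_at_leftP (fun y => G y%:E) (x * c^-1) _) (@distF_lc G (x * c^-1) dG)).
  move=> /(_ (fun n => u n * c^-1)); apply.
  split; first by move=> n; rewrite ltr_pM2r ?invr_gt0.
  by apply: cvgMl.
- move=> x x0; rewrite smulE // distF_le0 //.
  by rewrite -(mul0e (c^-1)%:E) lee_wpmul2r.
- by rewrite smulE // mulyr gtr0_sg ?invr_gt0 // mul1e distF_oo.
Qed.

Lemma smul_eps c : 0 <= c -> D_smul c (D_eps 0) = D_eps (0:R).
Proof.
rewrite le_eqVlt => /predU1P[<-|c0]; first exact: smul0.
apply: funext => x; rewrite smulE // /D_eps.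
case: x => [r||] //=; rewrite ?lte_fin.
- by rewrite pmulr_lgt0 // invr_gt0.
- by rewrite mulyr gtr0_sg ?invr_gt0 // mul1e.
- by rewrite mulNyr gtr0_sg ?invr_gt0 // mul1e.
Qed.

Lemma smul_anti x y (G : dist) : 0 <= x -> x <= y -> D_distF G ->
  D_dle (D_smul y G) (D_smul x G).
Proof.
rewrite le_eqVlt => /predU1P[<-|x0] xy dG.
  by rewrite smul0; apply: dle_eps0; apply: smul_dist.
have y0 : 0 < y by exact: lt_le_trans xy.
move=> z; rewrite !smulE //.
case: (leP z 0%E) => z0.
  have h a : 0 < a -> (z * (a^-1)%:E <= 0)%E.
    move=> a0; rewrite -(mul0e (a^-1)%:E) lee_wpmul2r //.
    by rewrite lee_fin invr_ge0 ltW.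
  by rewrite !distF_le0 // h.
apply: distF_mono => //; apply: lee_wpmul2l; first exact: ltW.
by rewrite lee_fin lef_pV2.
Qed.

End Basics.


Ltac sets_tac := apply: funext => ?; apply: propext; rewrite /setI /setD /setU /=; tauto.

Section Tau.
Variable R : realType.
Local Notation dist := (\bar R -> R).
Variable tau : dist -> dist -> dist.
Hypothesis htau : D_triangle_function tau.

Lemma tau_dist F G : D_distF F -> D_distF G -> D_distF (tau F G).
Proof. by case: htau => H *; apply: H. Qed.
Lemma tauC F G : D_distF F -> D_distF G -> tau F G = tau G F.
Proof. by case: htau => _ H *; apply: H. Qed.
Lemma tauA F G H : D_distF F -> D_distF G -> D_distF H ->
  tau F (tau G H) = tau (tau F G) H.
Proof. by case: htau => _ _ H' *; apply: H'. Qed.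
Lemma tau_e0r F : D_distF F -> tau F (D_eps 0) = F.
Proof. by case: htau => _ _ _ _ H *; apply: H. Qed.
Lemma tau_e0l F : D_distF F -> tau (D_eps 0) F = F.
Proof. by move=> dF; rewrite tauC ?tau_e0r //; exact: eps0_dist. Qed.
Lemma tau_monol F G H : D_distF F -> D_distF G -> D_distF H -> D_dle F G ->
  D_dle (tau F H) (tau G H).
Proof. by case: htau => _ _ _ M _ *; case: (M F G H). Qed.
Lemma tau_monor F G H : D_distF F -> D_distF G -> D_distF H -> D_dle F G ->
  D_dle (tau H F) (tau H G).
Proof. by case: htau => _ _ _ M _ *; case: (M F G H). Qed.
Lemma tau_mono2 F G F' G' : D_distF F -> D_distF G -> D_distF F' -> D_distF G' ->
  D_dle F F' -> D_dle G G' -> D_dle (tau F G) (tau F' G').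
Proof.
move=> *; apply: (@dle_trans _ _ (tau F' G)).
  exact: tau_monol.
exact: tau_monor.
Qed.
Lemma tau_ee : tau (D_eps 0) (D_eps 0) = D_eps 0.
Proof. by rewrite tau_e0r //; exact: eps0_dist. Qed.

Lemma tau_swap a b c d : D_distF a -> D_distF b -> D_distF c -> D_distF d ->
  tau (tau a b) (tau c d) = tau (tau a c) (tau b d).
Proof.
move=> da db dc dd.
rewrite -tauA //; last exact: tau_dist.
rewrite [tau b (tau c d)]tauA // [tau b c]tauC // -tauA //.
by rewrite tauA //; exact: tau_dist.
Qed.

End Tau.


Section SI.
Variable R : realType.
Local Notation dist := (\bar R -> R).
Variable tau : dist -> dist -> dist.
Hypothesis htau : D_triangle_function tau.
Hypothesis hdistr : D_tau_distributive tau.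
Variable Omega : Type.
Variable Sigma : set (set Omega).
Hypothesis hS : sigma_ring Sigma.

Lemma sS0 : Sigma set0. Proof. by case: hS. Qed.
Lemma sSD A B : Sigma A -> Sigma B -> Sigma (A `\` B).
Proof. by case: hS => _ H _; apply: H. Qed.
Lemma sSI A B : Sigma A -> Sigma B -> Sigma (A `&` B).
Proof.
move=> a b; have -> : A `&` B = A `\` (A `\` B) by sets_tac.
by apply: sSD => //; apply: sSD.
Qed.
Lemma sSU A B : Sigma A -> Sigma B -> Sigma (A `|` B).
Proof.
move=> a b; case: hS => _ _ H.
have -> : A `|` B = \bigcup_k (if k == 0%N then A else B).
  apply: funext => w; apply: propext; split.
    by case=> h; [exists 0%N | exists 1%N].
  by case=> k _; case: (k == 0%N) => h; [left|right].
by apply: H => k; case: (k == 0%N).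
Qed.

Fixpoint Ucells (s : seq (R * set Omega)) : set Omega :=
  if s is p :: s' then p.2 `|` Ucells s' else set0.
Fixpoint wrep (s : seq (R * set Omega)) : Prop :=
  if s is p :: s' then [/\ 0 <= p.1, Sigma p.2 & wrep s'] else True.
Fixpoint mrep (s : seq (R * set Omega)) : Prop :=
  if s is p :: s' then [/\ 0 <= p.1, Sigma p.2, p.2 `&` Ucells s' = set0 & mrep s']
  else True.

Lemma mrep_wrep s : mrep s -> wrep s.
Proof. by elim: s => //= p s IH [*]; split => //; apply: IH. Qed.

Lemma Ucells_Sigma s : wrep s -> Sigma (Ucells s).
Proof. by elim: s => [|p s IH] /=; [move=> _; exact: sS0|case=> *; apply: sSU => //; apply: IH]. Qed.

Lemma mrepP s : mrep s <-> D_simple_rep Sigma s.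
Proof.
elim: s => [|p s IH] /=.
  split => // _; split => // i j; by [].
split.
- case=> p0 pS pd /IH [h1 h2 h3]; split.
  + by move=> q; rewrite inE => /predU1P[->|/h1].
  + by move=> q; rewrite inE => /predU1P[->|/h2].
  + have dj j : (j < size s)%N -> p.2 `&` (nth (0, set0) s j).2 = set0.
      move=> js; rewrite -subset0 => w [a b].
      suff : (p.2 `&` Ucells s) w by rewrite pd.
      split => //.
      elim: s j js {IH h1 h2 h3 pd} b => // q s IHs [|j] /= js b; first by left.
      by right; apply: (IHs j).
    move=> [|i] [|j] //= ilt jlt ij.
    * exact: dj.
    * by rewrite setIC; apply: dj.
    * by apply: h3.
- case=> h1 h2 h3.
  have H1 : D_simple_rep Sigma s.
    split.
    + by move=> q qs; apply: h1; rewrite inE qs orbT.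
    + by move=> q qs; apply: h2; rewrite inE qs orbT.
    + by move=> i j ilt jlt ij; apply: (h3 i.+1 j.+1).
  split.
  + by apply: h1; rewrite inE eqxx.
  + by apply: h2; rewrite inE eqxx.
  + rewrite -subset0 => w [a b].
    suff [j [js bj]] : exists j, (j < size s)%N /\ (nth (0, set0) s j).2 w.
      by have := h3 0%N j.+1 isT js erefl; rewrite /= => e; have : (p.2 `&` (nth (0, set0) s j).2) w by []; rewrite e.
    elim: s {IH h1 h2 h3 H1} b => // q s IHs /= [b|/IHs [j [js bj]]].
      by exists 0%N.
    by exists j.+1.
  + exact/IH.
Qed.

Lemma eval_nil w : @D_simple_eval R Omega [::] w = 0.
Proof. by rewrite /D_simple_eval big_nil. Qed.
Lemma eval_cons (p : R * set Omega) s w : D_simple_eval (p :: s) w =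
  p.1 * \1_(p.2) w + D_simple_eval s w.
Proof. by rewrite /D_simple_eval big_cons. Qed.
Lemma eval_cons_in (p : R * set Omega) s w : p.2 w -> D_simple_eval (p :: s) w = p.1 + D_simple_eval s w.
Proof. by move=> h; rewrite eval_cons indicE mem_set // mulr1. Qed.
Lemma eval_cons_out (p : R * set Omega) s w : ~ p.2 w -> D_simple_eval (p :: s) w = D_simple_eval s w.
Proof. by move=> h; rewrite eval_cons indicE memNset // mulr0 add0r. Qed.
Lemma eval_out (s : seq (R * set Omega)) w : ~ Ucells s w -> D_simple_eval s w = 0.
Proof.
elim: s => [|p s IH] /=; first by rewrite eval_nil.
by move=> h; rewrite eval_cons_out ?IH // => ?; apply: h; [right|left].
Qed.
Lemma eval_ge0 (s : seq (R * set Omega)) w : wrep s -> 0 <= D_simple_eval s w.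
Proof.
elim: s => [|p s IH] /=; first by rewrite eval_nil.
case=> p0 _ ws; rewrite eval_cons addr_ge0 ?IH // mulr_ge0 // indicE ler0n.
Qed.

Local Notation SI := (D_simple_integral tau).
Local Notation dec := (D_decomposable tau Sigma).

Lemma dec_dist g A : dec g -> Sigma A -> D_distF (g A).
Proof. by case=> H _ _; apply: H. Qed.
Lemma dec_0 g : dec g -> g set0 = D_eps 0.
Proof. by case. Qed.
Lemma dec_split g D A : dec g -> Sigma D -> Sigma A ->
  g D = tau (g (D `&` A)) (g (D `\` A)).
Proof.
case=> _ _ H dD dA; rewrite -H; first (congr g; sets_tac).
- exact: sSI.
- exact: sSD.
- by sets_tac.
Qed.

Lemma SI_cons g E (p : R * set Omega) s :
  SI g E (p :: s) = tau (D_smul p.1 (g (E `&` p.2))) (SI g E s).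
Proof. by []. Qed.
Lemma SI_nil g (E : set Omega) : SI g E [::] = D_eps 0.
Proof. by []. Qed.

Lemma SI_dist g E s : dec g -> Sigma E -> wrep s -> D_distF (SI g E s).
Proof.
move=> dg dE; elim: s => [|p s IH] /=; first by move=> _; exact: eps0_dist.
case=> p0 pS ws; apply: tau_dist => //; last exact: IH.
by apply: smul_dist => //; apply: dec_dist => //; exact: sSI.
Qed.

Ltac auto_d := repeat first [ assumption | exact: eps0_dist | apply: tau_dist
  | apply: smul_dist | apply: dec_dist | apply: SI_dist | apply: mrep_wrep
  | apply: sSD | apply: sSI ].

Lemma smul_tau c G H : 0 <= c -> D_distF G -> D_distF H ->
  D_smul c (tau G H) = tau (D_smul c G) (D_smul c H).
Proof. by move=> *; apply: hdistr. Qed.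

Lemma SI_split g E F s : dec g -> Sigma E -> Sigma F -> wrep s ->
  SI g E s = tau (SI g (E `&` F) s) (SI g (E `\` F) s).
Proof.
move=> dg dE dF; elim: s => [|p s IH] /=; first by move=> _; rewrite tau_ee.
case=> p0 pS ws.
have dEA : Sigma (E `&` p.2) by exact: sSI.
have dEAF : Sigma (E `&` p.2 `&` F) by auto_d.
have dEAF' : Sigma (E `&` p.2 `\` F) by auto_d.
rewrite (dec_split dg dEA dF) smul_tau //; try by auto_d.
rewrite IH // tau_swap //; try by auto_d.
by do 2 congr tau; congr D_smul; congr g; sets_tac.
Qed.

Lemma SI_empty g E s : dec g -> wrep s -> E `&` Ucells s = set0 -> SI g E s = D_eps 0.
Proof.
move=> dg; elim: s => [|p s IH] //= [p0 pS ws] h.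
have h1 : E `&` p.2 = set0.
  rewrite -subset0 => w [a b]; have : (E `&` (p.2 `|` Ucells s)) w by (split => //; left).
  by rewrite h.
have h2 : E `&` Ucells s = set0.
  rewrite -subset0 => w [a b]; have : (E `&` (p.2 `|` Ucells s)) w by (split => //; right).
  by rewrite h.
by rewrite h1 dec_0 // smul_eps // IH // tau_ee.
Qed.

Lemma SI_msum g1 g2 E s : dec g1 -> dec g2 -> Sigma E -> wrep s ->
  SI (D_msum tau g1 g2) E s = tau (SI g1 E s) (SI g2 E s).
Proof.
move=> d1 d2 dE; elim: s => [|p s IH] /=; first by move=> _; rewrite tau_ee.
case=> p0 pS ws; have dEA : Sigma (E `&` p.2) by exact: sSI.
rewrite IH // /D_msum smul_tau //; try exact: dec_dist.
rewrite tau_swap //; try exact: SI_dist.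
all: by apply: smul_dist => //; exact: dec_dist.
Qed.

Lemma SI_mono1 g s D y : dec g -> mrep s -> Sigma D -> 0 <= y ->
  (forall w, D w -> D_simple_eval s w <= y) ->
  D_dle (D_smul y (g D)) (SI g D s).
Proof.
move=> dg; elim: s D => [|p s IH] D.
  by move=> _ dD y0 _; apply: dle_eps0; apply: smul_dist => //; exact: dec_dist.
case=> p0 pS pd ms dD y0 hy.
have ws : wrep s by exact: mrep_wrep.
have dDA : Sigma (D `&` p.2) by exact: sSI.
have dDA' : Sigma (D `\` p.2) by exact: sSD.
have wps : wrep (p :: s) by [].
rewrite (SI_split dg dD pS wps) (dec_split dg dD pS) smul_tau //; try exact: dec_dist.
rewrite !SI_cons.
have -> : SI g (D `&` p.2) s = D_eps 0.
  apply: SI_empty => //; rewrite -subset0 => w [[a b] c].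
  by have : (p.2 `&` Ucells s) w by []; rewrite pd.
have -> : (D `\` p.2) `&` p.2 = set0 by sets_tac.
rewrite dec_0 // smul_eps // tau_e0l //; last exact: SI_dist.
have -> : (D `&` p.2) `&` p.2 = D `&` p.2 by sets_tac.
rewrite tau_e0r //; last by apply: smul_dist => //; exact: dec_dist.
apply: tau_mono2 => //; try (by apply: smul_dist => //; exact: dec_dist); try exact: SI_dist.
- have [e|/eqP/set0P[w [dw pw]]] := pselect (D `&` p.2 = set0).
    by rewrite e dec_0 // !smul_eps //; exact: dle_refl.
  apply: smul_anti => //; last exact: dec_dist.
  apply: le_trans (hy w dw); rewrite eval_cons_in // lerDl eval_ge0 //.
- apply: IH => // w [dw pw]; rewrite -(eval_cons_out _ pw); exact: hy.
Qed.

Lemma SI_mono g s t E : dec g -> mrep s -> mrep t -> Sigma E ->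
  (forall w, E w -> D_simple_eval s w <= D_simple_eval t w) ->
  D_dle (SI g E t) (SI g E s).
Proof.
move=> dg ms; have ws := mrep_wrep ms.
elim: t E => [|q t IH] E mt dE h.
  rewrite SI_nil -(smul0 (g E)); apply: SI_mono1 => // w /h.
  by rewrite eval_nil.
case: mt => q0 qS qd mt'; have wt' := mrep_wrep mt'.
have wqt : wrep (q :: t) by [].
have dEB : Sigma (E `&` q.2) by auto_d.
have dEB' : Sigma (E `\` q.2) by auto_d.
rewrite (SI_split dg dE qS wqt) (SI_split dg dE qS ws) !SI_cons.
have -> : SI g (E `&` q.2) t = D_eps 0.
  apply: SI_empty => //; rewrite -subset0 => w [[a b] c].
  by have : (q.2 `&` Ucells t) w by []; rewrite qd.
have -> : (E `\` q.2) `&` q.2 = set0 by sets_tac.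
have -> : (E `&` q.2) `&` q.2 = E `&` q.2 by sets_tac.
rewrite dec_0 // smul_eps // tau_e0l // ?tau_e0r //; try by auto_d.
apply: tau_mono2 => //; try by auto_d.
- apply: SI_mono1 => // w [ew bw]; have := h w ew.
  rewrite eval_cons_in // (@eval_out t w) ?addr0 // => ut.
  by have : (q.2 `&` Ucells t) w by []; rewrite qd.
- apply: IH => // w [ew bw]; rewrite -(@eval_cons_out q t w bw); exact: h.
Qed.

End SI.


Section MX.
Variable R : realType.
Variable Omega : Type.
Variable Sigma : set (set Omega).
Hypothesis hS : sigma_ring Sigma.
Local Notation cells := (seq (R * set Omega)).
Local Notation Uc := (@Ucells R Omega).
Local Notation mrep := (@mrep R Omega Sigma).
Local Notation ev := (@D_simple_eval R Omega).

Definition maxc (s : cells) (y : R) (B : set Omega) : cells :=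
  [seq (Num.max p.1 y, p.2 `&` B) | p <- s].
Definition restrD (s : cells) (B : set Omega) : cells :=
  [seq (p.1, p.2 `\` B) | p <- s].

Fixpoint mx (s t : cells) {struct t} : cells :=
  if t is q :: t' then
    (q.1, q.2 `\` Uc s) :: maxc s q.1 q.2 ++ mx (restrD s q.2) t'
  else s.

Lemma Uc_cat (a b : cells) : Uc (a ++ b) = Uc a `|` Uc b.
Proof. by elim: a => [|p a IH] /=; [rewrite set0U | rewrite IH setUA]. Qed.
Lemma Uc_maxc s y B : Uc (maxc s y B) = Uc s `&` B.
Proof. by elim: s => [|p s IH] /=; [rewrite set0I | rewrite IH setIUl]. Qed.
Lemma Uc_restrD s B : Uc (restrD s B) = Uc s `\` B.
Proof. by elim: s => [|p s IH] /=; [rewrite set0D | rewrite IH setDUl]. Qed.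
Lemma Uc_mx s t : Uc (mx s t) `<=` Uc s `|` Uc t.
Proof.
elim: t s => [|q t IH] s /=; first by move=> w h; left.
move=> w [[bw _]|]; first by right; left.
rewrite Uc_cat Uc_maxc => -[[a b]|/IH]; first by left.
rewrite Uc_restrD => -[[a b]|c]; [by left | by right; right].
Qed.

Lemma disj_sub (A B C D : set Omega) : A `&` B = set0 -> C `<=` A -> D `<=` B ->
  C `&` D = set0.
Proof.
move=> h ca db; rewrite -subset0 => w [c d].
have : (A `&` B) w by (split; [apply: ca | apply: db]).
by rewrite h.
Qed.

Lemma mrep_cat (a b : cells) : mrep a -> mrep b -> Uc a `&` Uc b = set0 ->
  mrep (a ++ b).
Proof.
elim: a => [|p a IH] //= [p0 pS pd ma] mb h; split => //.
- rewrite Uc_cat; rewrite -subset0 => w [x [y|y]].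
    by have : (p.2 `&` Uc a) w by []; rewrite pd.
  have : ((p.2 `|` Uc a) `&` Uc b) w by (split => //; left).
  by rewrite h.
- apply: IH => //; apply: disj_sub h _ (@subset_refl _ _) => w y; by right.
Qed.

Lemma mrep_maxc s y B : mrep s -> 0 <= y -> Sigma B -> mrep (maxc s y B).
Proof.
move=> + y0 dB; elim: s => [|p s IH] //= [p0 pS pd ms]; split.
- by rewrite le_max p0.
- exact: sSI.
- rewrite Uc_maxc; apply: disj_sub pd _ _ => w []; by [].
- exact: IH.
Qed.

Lemma mrep_restrD s B : mrep s -> Sigma B -> mrep (restrD s B).
Proof.
move=> + dB; elim: s => [|p s IH] //= [p0 pS pd ms]; split => //.
- exact: sSD.
- rewrite Uc_restrD; apply: disj_sub pd _ _ => w []; by [].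
- exact: IH.
Qed.

Lemma mrep_mx s t : mrep s -> mrep t -> mrep (mx s t).
Proof.
elim: t s => [|q t IH] s //= ms [q0 qS qd mt]; split => //.
- apply: sSD => //; apply: Ucells_Sigma => //; exact: mrep_wrep.
- rewrite Uc_cat Uc_maxc -subset0 => w [[bw nu] [[u _]|/Uc_mx]] //.
  rewrite Uc_restrD => -[[u _]|ut] //.
  by have : (q.2 `&` Uc t) w by []; rewrite qd.
- apply: mrep_cat.
  + exact: mrep_maxc.
  + by apply: IH => //; apply: mrep_restrD.
  + rewrite Uc_maxc -subset0 => w [[u bw] /Uc_mx].
    rewrite Uc_restrD => -[[_ nb]|ut] //.
    by have : (q.2 `&` Uc t) w by []; rewrite qd.
Qed.

Lemma ev_cat (a b : cells) w : ev (a ++ b) w = ev a w + ev b w.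
Proof. by rewrite /D_simple_eval big_cat. Qed.

Lemma ev_in_uniq p (s : cells) w : mrep (p :: s) -> p.2 w -> ev s w = 0.
Proof.
case=> _ _ pd _ pw; apply: eval_out => u.
by have : (p.2 `&` Uc s) w by []; rewrite pd.
Qed.

Lemma ev_maxc s y B w : mrep s ->
  ev (maxc s y B) w = if `[< B w /\ Uc s w >] then Num.max (ev s w) y else 0.
Proof.
elim: s => [|p s IH] /= ms.
  rewrite eval_nil; case: asboolP => // -[_ []].
have ms' : mrep s by case: ms.
have [pw|npw] := pselect (p.2 w).
  have e1 : ev (p :: s) w = p.1.
    by rewrite (@eval_cons_in R Omega p s w pw) (ev_in_uniq ms pw) addr0.
  have e2 : ev (maxc s y B) w = 0.
    rewrite IH //; case: asboolP => // -[_ u].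
    by case: ms => _ _ pd _; have : (p.2 `&` Uc s) w by []; rewrite pd.
  have [bw|nbw] := pselect (B w).
    rewrite (@eval_cons_in R Omega (Num.max p.1 y, p.2 `&` B) _ w) /=; last by split.
    by rewrite e1 e2 addr0 asboolT //; split => //; left.
  rewrite eval_cons_out /=; last by case.
  by rewrite e2 asboolF //; case.
rewrite eval_cons_out /=; last by case.
rewrite (@eval_cons_out R Omega p s w npw) IH //.
by congr (if _ then _ else _); apply/asbool_equiv_eq; split => -[? h]; split => //;
  [right | case: h].
Qed.

Lemma ev_restrD s B w : ev (restrD s B) w = if `[< B w >] then 0 else ev s w.
Proof.
elim: s => [|p s IH] /=; first by rewrite !eval_nil; case: ifP.
rewrite !eval_cons IH /=; case: asboolP => bw.
  by rewrite indicE memNset ?mulr0 ?add0r // => -[].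
congr (_ * _ + _); rewrite !indicE.
by have [pw|npw] := pselect (p.2 w); [rewrite !mem_set | rewrite !memNset] => //; case.
Qed.

Lemma ev_mx s t w : mrep s -> mrep t ->
  ev (mx s t) w = Num.max (ev s w) (ev t w).
Proof.
elim: t s => [|q t IH] s /= ms.
  by move=> _; rewrite eval_nil max_l // (@eval_ge0 _ _ Sigma) //; exact: mrep_wrep.
move=> mt; have [q0 qS qd mt'] := mt.
rewrite eval_cons ev_cat IH //; last exact: mrep_restrD.
rewrite ev_maxc // ev_restrD.
have [bw|nbw] := pselect (q.2 w).
  have et : ev (q :: t) w = q.1.
    by rewrite (@eval_cons_in R Omega q t w bw) (ev_in_uniq mt bw) addr0.
  rewrite et /=.
  have -> : `[< q.2 w >] = true by apply/asboolP.
  rewrite (ev_in_uniq mt bw) maxxx addr0.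
  have [u|nu] := pselect (Uc s w).
    have -> : `[< q.2 w /\ Uc s w >] = true by apply/asboolP.
    by rewrite indicE memNset ?mulr0 ?add0r // => -[].
  have -> : `[< q.2 w /\ Uc s w >] = false by apply/asboolP; case.
  rewrite indicE mem_set //= mulr1 addr0 (eval_out nu) max_r //.
rewrite (@eval_cons_out R Omega q t w nbw) /=.
have -> : `[< q.2 w /\ Uc s w >] = false by apply/asboolP; case.
have -> : `[< q.2 w >] = false by apply/asboolP.
by rewrite indicE memNset ?mulr0 ?add0r // => -[].
Qed.

End MX.


Section Inf.
Variable R : realType.
Local Notation dist := (\bar R -> R).
Variable S : set dist.
Hypothesis SD : forall G, S G -> D_distF G.
Hypothesis S0 : exists G, S G.

Definition Pinf (y : R) : R := inf [set G y%:E | G in S].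
Definition Hinf (x : \bar R) : R :=
  match x with
  | r%:E => sup [set Pinf y | y in [set y | y < r]]
  | +oo%E => 1
  | -oo%E => 0
  end.

Lemma Pset_ne y : [set G y%:E | G in S] !=set0.
Proof. by case: S0 => G sG; exists (G y%:E), G. Qed.
Lemma Pset_lb y : lbound [set G y%:E | G in S] 0.
Proof. by move=> _ [G sG <-]; apply: distF_ge0; exact: SD. Qed.
Lemma Pset_hinf y : has_inf [set G y%:E | G in S].
Proof. by split; [exact: Pset_ne | exists 0; exact: Pset_lb]. Qed.

Lemma Pinf_le G y : S G -> Pinf y <= G y%:E.
Proof. by move=> sG; apply: (ge_inf (proj2 (Pset_hinf y))); exists G. Qed.
Lemma Pinf_ge0 y : 0 <= Pinf y.
Proof. by apply: lb_le_inf; [exact: Pset_ne | exact: Pset_lb]. Qed.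
Lemma Pinf_le1 y : Pinf y <= 1.
Proof.
case: S0 => G sG; apply: le_trans (Pinf_le y sG) _; apply: distF_le1; exact: SD.
Qed.
Lemma Pinf_mono y y' : y <= y' -> Pinf y <= Pinf y'.
Proof.
move=> yy; apply: lb_le_inf; first exact: Pset_ne.
move=> _ [G sG <-]; apply: le_trans (Pinf_le y sG) _.
by apply: distF_mono; [exact: SD | rewrite lee_fin].
Qed.
Lemma Pinf_le0 y : y <= 0 -> Pinf y = 0.
Proof.
move=> y0; apply/eqP; rewrite eq_le Pinf_ge0 andbT.
case: S0 => G sG; apply: le_trans (Pinf_le y sG) _.
by rewrite distF_le0 ?lee_fin //; exact: SD.
Qed.

Lemma Hset_ne r : [set Pinf y | y in [set y | y < r]] !=set0.
Proof. by exists (Pinf (r - 1)), (r - 1) => //=; rewrite ltrBlDr ltrDl. Qed.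
Lemma Hset_sup r : has_sup [set Pinf y | y in [set y | y < r]].
Proof.
split; first exact: Hset_ne.
by exists 1 => _ [y _ <-]; exact: Pinf_le1.
Qed.
Lemma Pinf_leH y r : y < r -> Pinf y <= Hinf r%:E.
Proof. by move=> yr; apply: (sup_upper_bound (Hset_sup r)); exists y. Qed.
Lemma Hinf_ub r c : (forall y, y < r -> Pinf y <= c) -> Hinf r%:E <= c.
Proof. by move=> h; apply: ge_sup; [exact: Hset_ne | move=> _ [y yr <-]; exact: h]. Qed.
Lemma Hinf_leP r : Hinf r%:E <= Pinf r.
Proof. by apply: Hinf_ub => y yr; apply: Pinf_mono; exact: ltW. Qed.

Lemma Hinf_dist : D_distF Hinf.
Proof.
have Hr0 r : 0 <= Hinf r%:E.
  by apply: le_trans (Pinf_ge0 (r - 1)) (Pinf_leH _); rewrite ltrBlDr ltrDl.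
have Hr1 r : Hinf r%:E <= 1 by apply: Hinf_ub => y _; exact: Pinf_le1.
split.
- by case=> [r||] /=; rewrite ?Hr0 ?Hr1 ?lexx ?ler01.
- case=> [r||] [r'||] //=; rewrite ?leey ?leNye ?lexx ?Hr0 ?Hr1 ?ler01 //.
  rewrite lee_fin => rr; apply: Hinf_ub => y yr; apply: Pinf_leH.
  exact: lt_le_trans rr.
- move=> r; apply/cvgrPdist_lt => e e0.
  have [_ [y yr <-] ye] := sup_adherent e0 (Hset_sup r).
  near=> t.
  have yt : y < t by near: t; apply: nbhs_left_gt.
  have tr : t < r by near: t; apply: nbhs_left_lt.
  have h1 : Pinf y <= Hinf t%:E by exact: Pinf_leH.
  have h2 : Hinf t%:E <= Hinf r%:E.
    by apply: Hinf_ub => z zt; apply: Pinf_leH; exact: lt_trans tr.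
  rewrite ger0_norm ?subr_ge0 //.
  by rewrite ltrBlDr -ltrBlDl; apply: lt_le_trans h1.
- case=> [r||] //= r0; apply/eqP; rewrite eq_le Hr0 andbT.
  by apply: Hinf_ub => y yr; rewrite Pinf_le0 //; apply: ltW; apply: lt_le_trans yr _.
- by [].
Unshelve. all: by end_near. Qed.

Lemma Hinf_lb G : S G -> D_dle Hinf G.
Proof.
move=> sG; have dG := SD sG.
case=> [r||] /=.
- exact: le_trans (Hinf_leP r) (Pinf_le r sG).
- by rewrite distF_oo.
- exact: distF_ge0.
Qed.

Lemma Hinf_greatest K : D_distF K -> (forall G, S G -> D_dle K G) -> D_dle K Hinf.
Proof.
move=> dK lbK; case=> [r||] /=.
- rewrite leNgt; apply/negP => Hr.
  have d0 : 0 < K r%:E - Hinf r%:E by rewrite subr_gt0.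
  have [t [tr ht]] : exists t, t < r /\ `|K r%:E - K t%:E| < K r%:E - Hinf r%:E.
    apply: (@filter_ex _ (r^'-)); near=> t; split.
      by near: t; apply: nbhs_left_lt.
    by near: t; move/cvgrPdist_lt: (@distF_lc _ K r dK) => /(_ _ d0).
  have Kt : K t%:E <= Pinf t.
    apply: lb_le_inf; first exact: Pset_ne.
    by move=> _ [G sG <-]; apply: lbK.
  have := le_trans Kt (Pinf_leH tr).
  move: ht; rewrite ltr_norml => /andP[_]; rewrite ltrBlDr -ltrBlDl opprB addrCA.
  by rewrite subrr addr0 ltNge => /negbTE ->.
- by rewrite distF_oo.
- by rewrite distF_le0 // leNye.
Unshelve. all: by end_near. Qed.

Lemma Hinf_is_dinf : D_is_dinf S Hinf.
Proof. by split; [exact: Hinf_dist | exact: Hinf_lb | exact: Hinf_greatest]. Qed.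

Lemma dinf_unique I : D_is_dinf S I -> I = Hinf.
Proof.
case=> dI lbI gI; apply: dle_antisym.
- exact: Hinf_greatest.
- by apply: gI; [exact: Hinf_dist | exact: Hinf_lb].
Qed.

Lemma Hinf_approx q q' e : q < q' -> 0 < e ->
  exists G, S G /\ G q%:E < Hinf q'%:E + e.
Proof.
move=> qq e0; have [_ [G sG <-] Ge] := inf_adherent e0 (Pset_hinf q).
exists G; split => //; apply: lt_le_trans Ge _.
by rewrite lerD2r; exact: Pinf_leH.
Qed.

End Inf.


Section Dense.
Variable R : realType.
Local Notation dist := (\bar R -> R).

Lemma cont_point (K : dist) a b : D_distF K -> a < b ->
  exists z, a < z < b /\ {for z, continuous (fun y : R => K y%:E)}.
Proof.
move=> dK ab; set F := fun y : R => K y%:E.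
have ndF : {in `[a, b] &, nondecreasing_fun F}.
  by move=> x y _ _ xy; apply: distF_mono => //; rewrite lee_fin.
have cD := discontinuity_countable ndF.
have [x [xab ndx]] : exists x, (x \in `]a, b[) /\ ~ discontinuity F x.
  apply: contrapT => hn.
  have sub : `]a, b[ `<=` [set x | (x \in `]a, b[) /\ discontinuity F x].
    move=> x xab; split; first by rewrite inE.
    by apply: contrapT => nd; apply: hn; exists x; split => //; rewrite inE.
  have mD : measurable [set x | (x \in `]a, b[) /\ discontinuity F x].
    by apply: countable_measurable => // t; exact: measurable_set1.
  have := @le_measure _ _ _ (@lebesgue_measure R) `]a, b[%classic
    [set x | (x \in `]a, b[) /\ discontinuity F x].
  rewrite !inE => /(_ (measurable_itv _) mD sub).
  move=> h; have h0 := countable_lebesgue_measure0 cD.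
  have h2 : (lebesgue_measure (`]a, b[%classic : set R) <= 0)%E.
    apply: (le_trans h); move: h0 => /eqP; rewrite eq_le => /andP[h0 _]; exact: h0.
  move: h2; rewrite lebesgue_measure_itv /= lte_fin ab.
  by rewrite -EFinB lee_fin subr_le0 leNgt ab.
move: xab; rewrite in_itv /= => /andP[ax xb].
exists x; split; first by rewrite ax xb.
have cl : cvg (F y @[y --> x^'-]).
  apply: nondecreasing_at_left_is_cvgr.
  - by near=> t => u v _ _ uv; apply: distF_mono => //; rewrite lee_fin.
  - by near=> t; exists 1 => _ [u _ <-]; apply: distF_le1.
have cr : cvg (F y @[y --> x^'+]).
  apply: nondecreasing_at_right_is_cvgr.
  - by near=> t => u v _ _ uv; apply: distF_mono => //; rewrite lee_fin.
  - by near=> t; exists 0 => _ [u _ <-]; apply: distF_ge0.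
have eqlr : lim (F y @[y --> x^'-]) = lim (F y @[y --> x^'+]).
  by apply/eqP; apply: contrapT => ne; apply: ndx; split => //; apply/negP.
have l1 : lim (F y @[y --> x^'-]) <= F x.
  apply: limr_le => //; near=> t; apply: distF_mono => //; rewrite lee_fin.
  by apply: ltW; near: t; apply: nbhs_left_lt.
have l2 : F x <= lim (F y @[y --> x^'+]).
  apply: limr_ge => //; near=> t; apply: distF_mono => //; rewrite lee_fin.
  by apply: ltW; near: t; apply: nbhs_right_gt.
have e1 : lim (F y @[y --> x^'-]) = F x.
  by apply/eqP; rewrite eq_le l1 eqlr l2.
have e2 : lim (F y @[y --> x^'+]) = F x by rewrite -eqlr.
apply/left_right_continuousP; split.
  by rewrite -[X in _ --> X]e1; exact: cl.
by rewrite -[X in _ --> X]e2; exact: cr.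
Unshelve. all: by end_near. Qed.

End Dense.


Section Main.
Variable R : realType.
Local Notation dist := (\bar R -> R).
Variable Omega : Type.
Variable tau : dist -> dist -> dist.
Variable Sigma : set (set Omega).
Variables (f : Omega -> \bar R) (E : set Omega).
Hypothesis htau : D_triangle_function tau.
Hypothesis hdistr : D_tau_distributive tau.
Hypothesis hS : sigma_ring Sigma.
Hypothesis f0 : forall w, (0 <= f w)%E.
Hypothesis dE : Sigma E.

Local Notation cells := (seq (R * set Omega)).
Local Notation mrep := (@mrep R Omega Sigma).
Local Notation ev := (@D_simple_eval R Omega).
Local Notation SI := (D_simple_integral tau).
Local Notation dec := (D_decomposable tau Sigma).
Local Notation SS g := (D_simple_integrals tau Sigma g E f).

Definition good (s : cells) := mrep s /\ (forall w, E w -> ((ev s w)%:E <= f w)%E).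

Lemma SS_char g G : SS g G <-> exists s, good s /\ G = SI g E s.
Proof.
split.
- by case=> s [/mrepP rs le ->]; exists s.
- by case=> s [[/mrepP rs le] ->]; exists s.
Qed.

Lemma good_nil : good [::].
Proof. by split => // w _; rewrite eval_nil. Qed.

Lemma SId g s : dec g -> mrep s -> D_distF (SI g E s).
Proof.
move=> dg ms; apply: (@SI_dist R tau htau Omega Sigma hS) => //.
exact: mrep_wrep.
Qed.
Lemma SIm g s t : dec g -> mrep s -> mrep t ->
  (forall w, E w -> ev s w <= ev t w) -> D_dle (SI g E t) (SI g E s).
Proof. by move=> *; apply: (@SI_mono R tau htau hdistr Omega Sigma hS). Qed.
Lemma SIsum g1 g2 s : dec g1 -> dec g2 -> mrep s ->
  SI (D_msum tau g1 g2) E s = tau (SI g1 E s) (SI g2 E s).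
Proof.
move=> *; apply: (@SI_msum R tau htau hdistr Omega Sigma hS) => //.
exact: mrep_wrep.
Qed.
Lemma evmx s t w : mrep s -> mrep t -> ev (mx s t) w = Num.max (ev s w) (ev t w).
Proof. exact: (@ev_mx R Omega Sigma hS). Qed.
Lemma mrepmx s t : mrep s -> mrep t -> mrep (mx s t).
Proof. exact: (@mrep_mx R Omega Sigma hS). Qed.

Lemma SS_dist g G : dec g -> SS g G -> D_distF G.
Proof.
by move=> dg /SS_char [s [[ms _] ->]]; apply: SId.
Qed.

Lemma SS_ne g : exists G, SS g G.
Proof. by exists (SI g E [::]); apply/SS_char; exists [::]; split => //; exact: good_nil. Qed.

Lemma dint_eq g : dec g -> D_dintegral tau Sigma g E f = Hinf (SS g).
Proof.
move=> dg; apply: dinf_unique.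
- by move=> G; exact: SS_dist.
- exact: SS_ne.
rewrite /D_dintegral; apply: epsilon_spec; exists (Hinf (SS g)).
apply: Hinf_is_dinf; [by move=> G; exact: SS_dist | exact: SS_ne].
Qed.

Lemma pick_ex g : dec g -> exists p : R -> R -> R -> cells,
  forall q q' e, good (p q q' e) /\
    (q < q' -> 0 < e -> SI g E (p q q' e) q%:E < Hinf (SS g) q'%:E + e).
Proof.
move=> dg.
have h : forall qq : R * R * R, exists s, good s /\
    (qq.1.1 < qq.1.2 -> 0 < qq.2 ->
      SI g E s qq.1.1%:E < Hinf (SS g) qq.1.2%:E + qq.2).
  case=> [[q q'] e] /=.
  have [qq|nqq] := ltP q q'; last first.
    by exists [::]; split => //; exact: good_nil.
  have [e0|ne0] := ltP 0 e; last first.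
    by exists [::]; split => //; exact: good_nil.
  have [G [/SS_char [s [gs ->]] lt]] := Hinf_approx (fun G => @SS_dist g G dg) (SS_ne g) qq e0.
  by exists s.
have [p hp] := choice _ h.
by exists (fun q q' e => p (q, q', e)) => q q' e; exact: (hp (q, q', e)).
Qed.

Lemma fold_good (L : seq cells) : (forall s, List.In s L -> good s) ->
  good (foldr (@mx R Omega) [::] L).
Proof.
elim: L => [|s L IH] /= h; first exact: good_nil.
have [ms ls] := h s (or_introl erefl).
have [mL lL] := IH (fun t ht => h t (or_intror ht)).
split; first exact: mrepmx.
move=> w ew; rewrite evmx //.
by case: (leP (ev s w) (ev (foldr (@mx R Omega) [::] L) w)) => _; [apply: lL | apply: ls].
Qed.

Lemma fold_ge (L : seq cells) s w : (forall s, List.In s L -> good s) ->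
  List.In s L -> ev s w <= ev (foldr (@mx R Omega) [::] L) w.
Proof.
elim: L => [|t L IH] //= h [<-|hs].
  rewrite evmx ?le_max ?lexx //; first exact: (proj1 (h t (or_introl erefl))).
  exact: (proj1 (fold_good (fun u hu => h u (or_intror hu)))).
rewrite evmx; first by rewrite le_max IH ?orbT // => u hu; apply: h; right.
  exact: (proj1 (h t (or_introl erefl))).
exact: (proj1 (fold_good (fun u hu => h u (or_intror hu)))).
Qed.

Definition grid (n j : nat) : R := j%:R / n.+1%:R.
Definition step (n : nat) : R := n.+1%:R^-1.

Lemma step_gt0 n : 0 < step n.
Proof. by rewrite /step invr_gt0 ltr0Sn. Qed.

Lemma dcvg_T g (p : R -> R -> R -> cells) (T : nat -> cells) : dec g ->
  (forall q q' e, good (p q q' e) /\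
    (q < q' -> 0 < e -> SI g E (p q q' e) q%:E < Hinf (SS g) q'%:E + e)) ->
  (forall n, good (T n)) ->
  (forall n j, (j <= (n.+1) ^ 2)%N -> forall w, E w ->
     ev (p (grid n j) (grid n j + step n) (step n)) w <= ev (T n) w) ->
  D_dcvg (fun n => SI g E (T n)) (Hinf (SS g)).
Proof.
move=> dg hp gT hT x cx.
have SD : forall G, SS g G -> D_distF G by move=> G; exact: SS_dist.
set H := Hinf (SS g).
have dH : D_distF H := Hinf_dist SD (SS_ne g).
have inS n : SS g (SI g E (T n)) by apply/SS_char; exists (T n).
have lb n : H x%:E <= SI g E (T n) x%:E := Hinf_lb SD (SS_ne g) (inS n) x%:E.
have dT n : D_distF (SI g E (T n)) by apply: SId => //; case: (gT n).
case: (leP x 0) => x0.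
  have -> : (fun n => SI g E (T n) x%:E) = (fun=> H x%:E).
    by apply: funext => n; rewrite !distF_le0 // ?lee_fin.
  exact: cvg_cst.
have hs : step n @[n --> \oo] --> 0 by exact: cvg_harmonic.
apply: (@squeeze_cvgr _ _ _ _ (fun=> H x%:E)
  (fun n => H (x + step n + step n)%:E + step n)); last first.
- rewrite -[X in _ --> X]addr0; apply: cvgD => //.
  apply: (cvg_comp (fun n => x + step n + step n) (fun y : R => H y%:E)); last exact: cx.
  have h2 : (x + step n + step n) @[n --> \oo] --> x + 0 + 0.
    by apply: cvgD => //; apply: cvgD => //; exact: cvg_cst.
  by rewrite !addr0 in h2.
- exact: cvg_cst.
near=> n; apply/andP; split; first exact: lb.
have nx : (Num.truncn x <= n)%N by near: n; exact: nbhs_infty_ge.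
have xn : x < n.+1%:R by rewrite -truncn_le_nat.
have n0 : (0 : R) < n.+1%:R by rewrite ltr0Sn.
set j := (Num.truncn (x * n.+1%:R)).+1.
have x0' : 0 <= x * n.+1%:R by rewrite mulr_ge0 // ltW.
have jle : (j <= (n.+1) ^ 2)%N.
  rewrite /j truncn_lt_nat // natrX expr2 ltr_pM2r //.
have hj1 : x < grid n j by rewrite /grid ltr_pdivlMr // /j truncnS_gt.
have hj2 : grid n j <= x + step n.
  rewrite /grid ler_pdivrMr // mulrDl /step mulVf ?gt_eqF // /j -natr1 lerD2r.
  by case/andP: (truncn_itv x0').
have pg := proj1 (hp (grid n j) (grid n j + step n) (step n)).
have sT := SIm dg (proj1 pg) (proj1 (gT n)) (hT n j jle).
apply: le_trans (_ : SI g E (T n) (grid n j)%:E <= _).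
  by apply: distF_mono => //; rewrite lee_fin ltW.
apply: le_trans (sT _) _.
apply: ltW; apply: lt_le_trans.
  by apply: (proj2 (hp _ _ _)) => //; [rewrite ltrDl; exact: step_gt0 | exact: step_gt0].
by rewrite lerD2r; apply: distF_mono => //; rewrite lee_fin lerD2r.
Unshelve. all: by end_near. Qed.

Lemma cvg_ge_seq (u : nat -> R) l c : u n @[n --> \oo] --> l -> (forall n, c <= u n) -> c <= l.
Proof.
move=> h hc; rewrite -(cvg_lim _ h) //; apply: limr_ge; first by apply/cvg_ex; exists l.
by near=> n; apply: hc.
Unshelve. all: by end_near. Qed.
Lemma cvg_le_seq (u : nat -> R) l c : u n @[n --> \oo] --> l -> (forall n, u n <= c) -> l <= c.
Proof.
move=> h hc; rewrite -(cvg_lim _ h) //; apply: limr_le; first by apply/cvg_ex; exists l.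
by near=> n; apply: hc.
Unshelve. all: by end_near. Qed.

Lemma foldj_good (F : nat -> cells) l : (forall j, good (F j)) ->
  good (foldr (fun j acc => mx (F j) acc) [::] l).
Proof.
move=> hF; elim: l => [|j l IH] /=; first exact: good_nil.
have [ms ls] := hF j; have [mL lL] := IH.
split; first exact: mrepmx.
move=> w ew; rewrite evmx //.
by case: (leP (ev (F j) w) (ev (foldr (fun j acc => mx (F j) acc) [::] l) w)) => _;
  [apply: lL | apply: ls].
Qed.

Lemma foldj_ge (F : nat -> cells) l j w : (forall j, good (F j)) ->
  j \in l -> ev (F j) w <= ev (foldr (fun j acc => mx (F j) acc) [::] l) w.
Proof.
move=> hF; elim: l => [|k l IH] //=; rewrite inE => /predU1P[->|jl].
  by rewrite evmx ?le_max ?lexx //; [exact: (proj1 (hF k)) | exact: (proj1 (foldj_good l hF))].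
rewrite evmx; first by rewrite le_max IH ?orbT.
  exact: (proj1 (hF k)).
exact: (proj1 (foldj_good l hF)).
Qed.

Lemma SSm_char g1 g2 G : dec g1 -> dec g2 -> SS (D_msum tau g1 g2) G ->
  exists s, good s /\ G = tau (SI g1 E s) (SI g2 E s).
Proof.
move=> d1 d2 /SS_char [s [gs ->]]; exists s; split => //.
by rewrite SIsum //; case: gs.
Qed.

Lemma main_eq g1 g2 : dec g1 -> dec g2 -> D_tau_continuous tau ->
  Hinf (SS (D_msum tau g1 g2)) = tau (Hinf (SS g1)) (Hinf (SS g2)).
Proof.
move=> d1 d2 hcont.
have SD1 : forall G, SS g1 G -> D_distF G by move=> G; exact: SS_dist.
have SD2 : forall G, SS g2 G -> D_distF G by move=> G; exact: SS_dist.
have SDm : forall G, SS (D_msum tau g1 g2) G -> D_distF G.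
  move=> G /(SSm_char d1 d2) [s [[ms _] ->]].
  by apply: tau_dist => //; apply: SId.
set HA := Hinf (SS g1); set HB := Hinf (SS g2).
set I := Hinf (SS (D_msum tau g1 g2)).
have dHA : D_distF HA := Hinf_dist SD1 (SS_ne g1).
have dHB : D_distF HB := Hinf_dist SD2 (SS_ne g2).
have dI : D_distF I := Hinf_dist SDm (SS_ne _).
have dK : D_distF (tau HA HB) by apply: tau_dist.
apply: dle_antisym; last first.
  apply: (Hinf_greatest SDm (SS_ne _)) => // G /(SSm_char d1 d2) [s [[ms ls] ->]].
  apply: tau_mono2 => //; try by apply: SId.
  - by apply: Hinf_lb => //; [exact: SS_ne | apply/SS_char; exists s].
  - by apply: Hinf_lb => //; [exact: SS_ne | apply/SS_char; exists s].
have contle : forall z, {for z, continuous (fun y : R => tau HA HB y%:E)} ->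
    I z%:E <= tau HA HB z%:E.
  move=> z cz.
  have [p1 hp1] := pick_ex d1; have [p2 hp2] := pick_ex d2.
  pose P n j := mx (p1 (grid n j) (grid n j + step n) (step n))
                   (p2 (grid n j) (grid n j + step n) (step n)).
  have gP n j : good (P n j).
    have [m1 l1] := proj1 (hp1 (grid n j) (grid n j + step n) (step n)).
    have [m2 l2] := proj1 (hp2 (grid n j) (grid n j + step n) (step n)).
    split; first exact: mrepmx.
    move=> w ew; rewrite evmx //.
    by case: (leP (ev (p1 (grid n j) (grid n j + step n) (step n)) w)
      (ev (p2 (grid n j) (grid n j + step n) (step n)) w)) => _; [apply: l2 | apply: l1].
  pose T n := foldr (fun j acc => mx (P n j) acc) [::] (iota 0 ((n.+1) ^ 2).+1).
  have gT n : good (T n) by apply: foldj_good.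
  have hT n j : (j <= (n.+1) ^ 2)%N -> forall w, ev (P n j) w <= ev (T n) w.
    by move=> jle w; apply: foldj_ge => //; rewrite mem_iota add0n ltnS jle.
  have cA : D_dcvg (fun n => SI g1 E (T n)) HA.
    apply: (dcvg_T d1 hp1) => // n j jle w ew; apply: le_trans (hT n j jle w).
    have [m1 _] := proj1 (hp1 (grid n j) (grid n j + step n) (step n)).
    have [m2 _] := proj1 (hp2 (grid n j) (grid n j + step n) (step n)).
    by rewrite /P evmx // le_max lexx.
  have cB : D_dcvg (fun n => SI g2 E (T n)) HB.
    apply: (dcvg_T d2 hp2) => // n j jle w ew; apply: le_trans (hT n j jle w).
    have [m1 _] := proj1 (hp1 (grid n j) (grid n j + step n) (step n)).
    have [m2 _] := proj1 (hp2 (grid n j) (grid n j + step n) (step n)).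
    by rewrite /P evmx // le_max lexx orbT.
  have := hcont _ _ _ _ (fun n => SId d1 (proj1 (gT n))) (fun n => SId d2 (proj1 (gT n)))
    dHA dHB cA cB z cz.
  move=> /cvg_ge_seq; apply => n.
  have inS : SS (D_msum tau g1 g2) (SI (D_msum tau g1 g2) E (T n)).
    by apply/SS_char; exists (T n).
  have := Hinf_lb SDm (SS_ne _) inS z%:E.
  by rewrite SIsum //; case: (gT n).
case=> [r||].
- have hlt n : r - step n < r by rewrite ltrBlDr ltrDl step_gt0.
  have [u hu] := choice _ (fun n => cont_point dK (hlt n)).
  have ulr n : u n < r by case: (hu n) => /andP[].
  have ucv : u n @[n --> \oo] --> r.
    apply: (@squeeze_cvgr _ _ _ _ (fun n => r - step n) (fun=> r)).
    - by near=> n; case: (hu n) => /andP[a b] _; rewrite !ltW.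
    - have h2 : (r - step n) @[n --> \oo] --> r - 0.
        by apply: cvgB; [exact: cvg_cst | exact: cvg_harmonic].
      by rewrite subr0 in h2.
    - exact: cvg_cst.
  have := proj1 (cvg_at_leftP (fun y => I y%:E) r (I r%:E)) (@distF_lc _ I r dI) u
    (conj ulr ucv).
  move/cvg_le_seq; apply => n.
  apply: le_trans (contle _ (proj2 (hu n))) _.
  by apply: distF_mono => //; rewrite lee_fin ltW.
- by rewrite !distF_oo.
- by rewrite distF_le0 // ?leNye; apply: distF_ge0.
Unshelve. all: by end_near. Qed.

Lemma dint_eq' g : (forall G, SS g G -> D_distF G) ->
  D_dintegral tau Sigma g E f = Hinf (SS g).
Proof.
move=> SD; apply: dinf_unique => //; first exact: SS_ne.
rewrite /D_dintegral; apply: epsilon_spec; exists (Hinf (SS g)).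
by apply: Hinf_is_dinf => //; exact: SS_ne.
Qed.

Lemma SSm_dist g1 g2 : dec g1 -> dec g2 ->
  forall G, SS (D_msum tau g1 g2) G -> D_distF G.
Proof.
move=> d1 d2 G /(SSm_char d1 d2) [s [[ms _] ->]].
by apply: tau_dist => //; apply: SId.
Qed.

Lemma final g1 g2 : dec g1 -> dec g2 -> D_tau_continuous tau ->
  D_integrable tau Sigma (D_msum tau g1 g2) E f /\
  D_dintegral tau Sigma (D_msum tau g1 g2) E f =
    tau (D_dintegral tau Sigma g1 E f) (D_dintegral tau Sigma g2 E f).
Proof.
move=> d1 d2 hc; have SDm := SSm_dist d1 d2.
split.
  exists (Hinf (SS (D_msum tau g1 g2))); split.
    exact: Hinf_dist (SS_ne _).
  by move=> G; apply: Hinf_lb => //; exact: SS_ne.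
by rewrite (dint_eq' SDm) !dint_eq // main_eq.
Qed.

End Main.


Theorem theorem5p5 (R : realType) (Omega : Type)
  (tau : (\bar R -> R) -> (\bar R -> R) -> (\bar R -> R))
  (Sigma : set (set Omega)) (g1 g2 : set Omega -> \bar R -> R)
  (f : Omega -> \bar R) (E : set Omega) :
  D_triangle_function tau -> D_tau_continuous tau -> D_tau_distributive tau ->
  sigma_ring Sigma -> [set: Omega] != set0 ->
  D_decomposable tau Sigma g1 -> D_cont_from_below Sigma g1 ->
  D_decomposable tau Sigma g2 -> D_cont_from_below Sigma g2 ->
  D_simple_measurable Sigma f -> (forall w, (0 <= f w)%E) ->
  Sigma E ->
  D_integrable tau Sigma g1 E f -> D_integrable tau Sigma g2 E f ->
  D_integrable tau Sigma (D_msum tau g1 g2) E f /\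
  D_dintegral tau Sigma (D_msum tau g1 g2) E f =
    tau (D_dintegral tau Sigma g1 E f) (D_dintegral tau Sigma g2 E f).
Proof.
move=> htau hcont hdistr hS _ d1 _ d2 _ _ f0 dE _ _.
exact: (final htau hdistr hS f0 dE d1 d2 hcont).
Qed.
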